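(* In the setting below, with $Q=L/\mu$, suppose $0<\eta\le\frac{1}{L(K+1)}$, let $a\ge2$ be an integer and set $\epsilon_i=2\eta L(\eta KL)^{i-1}$ for $i\ge 1$. Then for every integer $k\ge aK+1$, \[ \Big(1+\eta\frac{\mu}{8}\Big)F_{k+1}\le\Big(1-\sum_{i=1}^{a-1}\epsilon_i\Big)F_k+\sum_{i=1}^{a-1}\epsilon_i F_{k-iK}+4KQ\,\epsilon_{a-1}\sum_{j=k-aK}^{k}F_j . \]
   Context: Let $m,n\ge 1$ be integers and $\|\cdot\|$ the Euclidean norm on $\mathbb{R}^n$. For $i=1,\dots,m$, let $f_i:\mathbb{R}^n\to\mathbb{R}$ be continuously differentiable with $\|\nabla f_i(x)-\nabla f_i(y)\|\le L_i\|x-y\|$ for all $x,y$, where $L_i\ge 0$ (the $f_i$ are not assumed convex). Let $f=\frac1m\sum_{i=1}^m f_i$ and $L=\frac1m\sum_{i=1}^m L_i$. Assume $f$ is $\mu$-strongly convex for some $\mu>0$ (i.e. $x\mapsto f(x)-\frac{\mu}{2}\|x\|^2$ is convex). Let $r:\mathbb{R}^n\to(-\infty,\infty]$ be proper, closed and convex, let $F=f+r$, and let $x^*$ be the unique minimizer of $F$. For $\eta>0$ define $\mathrm{prox}_r^\eta(y)=\arg\min_{x\in\mathbb{R}^n}\{\frac12\|x-y\|^2+\eta r(x)\}$. PIAG method: fix an integer $K\ge 0$, a step size $\eta>0$ and $x_0\in\mathbb{R}^n$; for each $k\ge0$ and each $i$ let $\tau_{i,k}$ be any (deterministically chosen) integer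 with $\max(k-K,0)\le\tau_{i,k}\le k$; set $g_k=\frac1m\sum_{i=1}^m\nabla f_i(x_{\tau_{i,k}})$ and $x_{k+1}=\mathrm{prox}_r^\eta(x_k-\eta g_k)$. Define $F_k=F(x_k)-F(x^* )$. *)

(* Defs.v *)
From HB Require Import structures.
From mathcomp Require Import all_boot all_order all_algebra.
From mathcomp Require Import all_classical all_reals all_analysis.
Set Implicit Arguments. Unset Strict Implicit. Unset Printing Implicit Defensive.
Import Order.TTheory GRing.Theory Num.Theory.
Import numFieldNormedType.Exports.
Local Open Scope ring_scope.

Section Defs.
Variables (R : realType) (n : nat).
Local Notation vec := 'rV[R]_n.

Definition dotv (u v : vec) : R := \sum_(j < n) u 0 j * v 0 j.
Definition enorm (u : vec) : R := Num.sqrt (\sum_(j < n) u 0 j ^+ 2).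

Definition is_gradient (h : vec -> R) (g : vec -> vec) : Prop :=
  forall x, differentiable h x /\ forall v, 'd h x v = dotv (g x) v.

Definition convex_fun (h : vec -> R) : Prop :=
  forall (x y : vec) (t : R), 0 <= t <= 1 ->
    h (t *: x + (1 - t) *: y) <= t * h x + (1 - t) * h y.

Definition strongly_convex (mu : R) (h : vec -> R) : Prop :=
  convex_fun (fun x => h x - mu / 2 * enorm x ^+ 2).

Definition proper_fun (r : vec -> \bar R) : Prop :=
  (forall x, r x != -oo%E) /\ exists x, r x \is a fin_num.
Definition closed_fun (r : vec -> \bar R) : Prop :=
  closed [set p : vec * R | (r p.1 <= p.2%:E)%E].
Definition convex_efun (r : vec -> \bar R) : Prop :=
  forall (x y : vec) (t : R), 0 < t < 1 ->
    (r (t *: x + (1 - t) *: y)%R <= t%:E * r x + (1 - t)%R%:E * r y)%E.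

Definition is_prox (r : vec -> \bar R) (eta : R) (y p : vec) : Prop :=
  forall z, ((2^-1 * enorm (p - y) ^+ 2)%:E + eta%:E * r p
             <= (2^-1 * enorm (z - y) ^+ 2)%:E + eta%:E * r z)%E.

End Defs.

(* Main.v *)
Require Import Defs.
From HB Require Import structures.
From mathcomp Require Import all_boot all_order all_algebra.
From mathcomp Require Import all_classical all_reals all_analysis.
From mathcomp Require Import ring lra.
Set Implicit Arguments. Unset Strict Implicit. Unset Printing Implicit Defensive.
Import Order.TTheory GRing.Theory Num.Theory.
Import numFieldNormedType.Exports.
Local Open Scope ring_scope.
Section Vec.
Variables (R : realType) (n : nat).
Local Notation vec := 'rV[R]_n.
Implicit Types (u v w : vec).

Lemma dotvC u v : dotv u v = dotv v u.
Proof. by apply: eq_bigr => j _; rewrite mulrC. Qed.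

Lemma dotvDl u v w : dotv (u + v) w = dotv u w + dotv v w.
Proof. by rewrite /dotv -big_split; apply: eq_bigr => j _; rewrite mxE mulrDl. Qed.

Lemma dotvZl (c : R) u v : dotv (c *: u) v = c * dotv u v.
Proof. by rewrite /dotv mulr_sumr; apply: eq_bigr => j _; rewrite mxE mulrA. Qed.

Lemma dotvNl u v : dotv (- u) v = - dotv u v.
Proof. by rewrite -scaleN1r dotvZl mulN1r. Qed.

Lemma dotvBl u v w : dotv (u - v) w = dotv u w - dotv v w.
Proof. by rewrite dotvDl dotvNl. Qed.

Lemma dotvDr u v w : dotv w (u + v) = dotv w u + dotv w v.
Proof. by rewrite dotvC dotvDl !(dotvC w). Qed.

Lemma dotvZr (c : R) u v : dotv v (c *: u) = c * dotv v u.
Proof. by rewrite dotvC dotvZl dotvC. Qed.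

Lemma dotvNr u v : dotv v (- u) = - dotv v u.
Proof. by rewrite dotvC dotvNl dotvC. Qed.

Lemma dotvBr u v w : dotv w (u - v) = dotv w u - dotv w v.
Proof. by rewrite dotvDr dotvNr. Qed.

Lemma dotv_suml (I : finType) (F : I -> vec) v :
  dotv (\sum_i F i) v = \sum_i dotv (F i) v.
Proof.
rewrite /dotv exchange_big /=; apply: eq_bigr => j _.
by rewrite summxE mulr_suml.
Qed.

Lemma dotv_ge0 u : 0 <= dotv u u.
Proof. by apply: sumr_ge0 => j _; rewrite -expr2 sqr_ge0. Qed.

Lemma enorm2 u : enorm u ^+ 2 = dotv u u.
Proof.
rewrite /enorm sqr_sqrtr; last by apply: sumr_ge0 => j _; rewrite sqr_ge0.
by apply: eq_bigr => j _; rewrite expr2.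
Qed.

Lemma enorm_ge0 u : 0 <= enorm u.
Proof. exact: sqrtr_ge0. Qed.

Lemma dotv_eq0 u : dotv u u = 0 -> u = 0.
Proof.
move=> h; apply/matrixP => i j; rewrite mxE (ord1 i).
have H : forall j : 'I_n, true -> 0 <= u 0 j * u 0 j.
  by move=> k _; rewrite -expr2 sqr_ge0.
have := @psumr_eq0P _ _ _ _ H h j isT.
by move/eqP; rewrite mulf_eq0 orbb => /eqP.
Qed.

Lemma dotv0l v : dotv 0 v = 0.
Proof. by rewrite /dotv big1 // => j _; rewrite mxE mul0r. Qed.

Lemma enorm_eq0 u : enorm u = 0 -> u = 0.
Proof. by move=> h; apply: dotv_eq0; rewrite -enorm2 h expr0n. Qed.

Lemma young_base u v (t : R) :
  2 * t * dotv u v <= t ^+ 2 * dotv u u + dotv v v.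
Proof.
have := dotv_ge0 (t *: u - v).
rewrite !(dotvBl, dotvBr, dotvZl, dotvZr) (dotvC v u).
by move=> h; nra.
Qed.

Lemma young u v (s : R) : 0 < s ->
  dotv u v <= s / 2 * dotv u u + 1 / (2 * s) * dotv v v.
Proof.
move=> s0; have := young_base u v s.
have := dotv_ge0 u; have := dotv_ge0 v.
set a := dotv u v; set b := dotv u u; set c := dotv v v => hc hb h.
rewrite -(@ler_pM2l _ (2 * s)); last by rewrite mulr_gt0.
have -> : 2 * s * (s / 2 * b + 1 / (2 * s) * c) = s ^+ 2 * b + c.
  by field; rewrite gt_eqF.
exact: h.
Qed.

Lemma CS u v : dotv u v <= enorm u * enorm v.
Proof.
have [u0|] := eqVneq (enorm u) 0.
  by rewrite u0 mul0r (enorm_eq0 u0) dotv0l.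
have [v0|] := eqVneq (enorm v) 0.
  by rewrite v0 mulr0 (enorm_eq0 v0) dotvC dotv0l.
move=> nv nu.
have pu : 0 < enorm u by rewrite lt_def nu enorm_ge0.
have pv : 0 < enorm v by rewrite lt_def nv enorm_ge0.
have := young_base u v (enorm v / enorm u).
rewrite -!enorm2.
set A := enorm u; set B := enorm v; set c := dotv u v => h.
have e : (B / A) ^+ 2 * A ^+ 2 + B ^+ 2 = 2 * (B / A) * (A * B).
  by field; rewrite gt_eqF.
rewrite e in h.
have : 0 < 2 * (B / A) by rewrite mulr_gt0 // divr_gt0.
by move=> h2; rewrite -(ler_pM2l h2).
Qed.

Lemma enormZ (c : R) u : enorm (c *: u) = `|c| * enorm u.
Proof.
apply: (@pexpIrn _ 2) => //; rewrite ?nnegrE ?mulr_ge0 ?enorm_ge0 //.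
by rewrite exprMn !enorm2 dotvZl dotvZr mulrA -expr2 real_normK ?num_real.
Qed.

Lemma enormD u v : enorm (u + v) <= enorm u + enorm v.
Proof.
rewrite -(@ler_pXn2r _ 2) // ?nnegrE ?addr_ge0 ?enorm_ge0 //.
rewrite enorm2 sqrrD !enorm2 dotvDl !dotvDr (dotvC v u).
have := CS u v; lra.
Qed.

Lemma enormN u : enorm (- u) = enorm u.
Proof. by rewrite -scaleN1r enormZ normrN1 mul1r. Qed.

Lemma enorm_sum (I : eqType) (s : seq I) (P : pred I) (F : I -> vec) :
  enorm (\sum_(i <- s | P i) F i) <= \sum_(i <- s | P i) enorm (F i).
Proof.
elim/big_ind2: _ => //.
  by rewrite /enorm /dotv big1 ?sqrtr0 // => j _; rewrite mxE expr0n.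
move=> x1 x2 y1 y2 h1 h2; apply: le_trans (enormD _ _) _; exact: lerD.
Qed.

End Vec.

Section Vec2.
Variables (R : realType) (n : nat).
Local Notation vec := 'rV[R]_n.

Lemma young2 (v w : vec) (al be : R) :
  2 * al * be * dotv v w <= al ^+ 2 * dotv v v + be ^+ 2 * dotv w w.
Proof.
have := dotv_ge0 (al *: v - be *: w).
rewrite !(dotvBl, dotvBr, dotvZl, dotvZr) (dotvC w v).
move=> h; nra.
Qed.

Lemma dotv_par (v w : vec) : dotv (v - w) (v - w) <= 2 * dotv v v + 2 * dotv w w.
Proof.
have := dotv_ge0 (v + w).
rewrite !(dotvBl, dotvBr, dotvDl, dotvDr) (dotvC w v).
move=> h; lra.
Qed.

End Vec2.

Lemma sq_sum_ord (R : realType) (N : nat) (w : 'I_N -> R) :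
  (forall i, 0 <= w i) -> (\sum_(i < N) w i) ^+ 2 <= N%:R * \sum_(i < N) w i ^+ 2.
Proof.
move=> w0.
pose u : 'rV[R]_N := \row_(i < N) w i.
pose v : 'rV[R]_N := const_mx 1.
have h := CS u v.
have e1 : dotv u v = \sum_(i < N) w i by apply: eq_bigr => i _; rewrite !mxE mulr1.
have e2 : enorm u ^+ 2 = \sum_(i < N) w i ^+ 2.
  by rewrite enorm2; apply: eq_bigr => i _; rewrite !mxE expr2.
have e3 : enorm v ^+ 2 = N%:R.
  rewrite enorm2 /dotv (eq_bigr (fun _ => 1)); last by move=> i _; rewrite !mxE mulr1.
  by rewrite sumr_const card_ord.
rewrite e1 in h.
have s0 : 0 <= \sum_(i < N) w i by apply: sumr_ge0 => i _.
have : (\sum_(i < N) w i) ^+ 2 <= (enorm u * enorm v) ^+ 2.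
  by rewrite -(@ler_pXn2r _ 2) // in h; rewrite ?nnegrE // mulr_ge0 ?enorm_ge0.
by rewrite exprMn e2 e3 mulrC.
Qed.
Section Anal.
Variables (R : realType) (n : nat).
Local Notation vec := 'rV[R]_n.
Local Open Scope classical_set_scope.

Lemma deriv_bound (h : vec -> R) (x d : vec) (D A B : R) :
  is_derive x d h D ->
  (forall t, 0 < t < 1 -> h (x + t *: d) <= h x + t * A + t ^+ 2 * B) ->
  D <= A.
Proof.
move=> hd hb.
have c : (fun s : R => s^-1 *: ((h \o shift x) (s *: d) - h x)) @ 0^' --> D.
  rewrite -(@derive_val _ _ _ _ _ _ _ hd); exact: (@ex_derive _ _ _ _ _ _ _ hd).
have sub : (0:R)^'+ `=>` 0^'.
  move=> P; rewrite /at_right /dnbhs /within /=; apply: filterS => y hy y0.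
  by apply: hy; exact: lt0r_neq0.
have c2 := cvg_trans (cvg_app _ sub) c.
have c3 : (fun s : R => s^-1 *: ((h \o shift x) (s *: d) - h x) - s * B) @ 0^'+
   --> D - 0 * B.
  apply: cvgB => //; apply: cvgMr_tmp.
  apply: cvg_at_right_filter; exact: cvg_id.
rewrite mul0r subr0 in c3.
apply: (cvgr_to_le c3).
near=> s.
have s0 : 0 < s by near: s; exact: nbhs_right_gt.
have s1 : s < 1 by near: s; exact: nbhs_right_lt.
rewrite /= addrC.
have := hb s (ltac:(by rewrite s0 s1)).
move=> hh; rewrite /GRing.scale /=.
rewrite [x + _]addrC in hh.
set H := h _ in hh *.
have e : s^-1 * (H - h x) <= A + s * B.
  rewrite mulrC ler_pdivrMr //.
  nra.
change (scalemx s d) with (s *: d) in e.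
lra.
Unshelve. all: by end_near.
Qed.

End Anal.
Section Anal2.
Variables (R : realType) (n : nat).
Local Notation vec := 'rV[R]_n.
Local Open Scope classical_set_scope.

Lemma line_derive (h : vec -> R) (G : vec -> vec) (x d : vec) (t : R) :
  (forall y, is_derive y d h (dotv (G y) d)) ->
  is_derive t 1 (fun s => h (x + s *: d)) (dotv (G (x + t *: d)) d).
Proof.
move=> hd; have hy := hd (x + t *: d).
have key : (fun s : R => s^-1 *: (((fun s => h (x + s *: d)) \o shift t) (s *: 1)
    - h (x + t *: d))) =
  (fun s : R => s^-1 *: ((h \o shift (x + t *: d)) (s *: d) - h (x + t *: d))).
  apply/funext => s /=; congr (_ *: (h _ - _)).
  rewrite -[s *: 1]/(s * 1) mulr1 scalerDl addrCA; done.
split.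
  rewrite /derivable key; exact: (@ex_derive _ _ _ _ _ _ _ hy).
rewrite /derive key; exact: (@derive_val _ _ _ _ _ _ _ hy).
Qed.

End Anal2.
Section Anal3.
Variables (R : realType) (n : nat).
Local Notation vec := 'rV[R]_n.
Local Open Scope classical_set_scope.

Lemma descent (h : vec -> R) (G : vec -> vec) (L : R) (x d : vec) :
  (forall y v, is_derive y v h (dotv (G y) v)) -> 0 <= L ->
  (forall u v, enorm (G u - G v) <= L * enorm (u - v)) ->
  h (x + d) <= h x + dotv (G x) d + L / 2 * dotv d d.
Proof.
move=> hd L0 hG.
set c := dotv (G x) d; set b := L / 2 * dotv d d.
pose psi : R -> R := (fun s : R => h (x + s *: d)) - ((fun s : R => c * s) + (fun s : R => b * s ^+ 2)).
pose df := fun t : R => dotv (G (x + t *: d)) d - (c + b * (2 * t)).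
have hpsi : forall t : R, is_derive t 1 psi (df t).
  move=> t; have h1 := line_derive x t (fun y => hd y d).
  rewrite /psi /df; apply: is_derive_eq.
  rewrite /GRing.scale /=; ring.
have [c0 c0i e] : exists2 c0, c0 \in `]0, 1[%R & psi 1 - psi 0 = df c0 * (1 - 0).
  apply: (@MVT _ psi df) => //.
  apply: continuous_subspaceT => t; apply: differentiable_continuous.
  apply/derivable1_diffP; exact: (@ex_derive _ _ _ _ _ _ _ (hpsi t)).
have c00 : 0 <= c0 by move: c0i; rewrite in_itv /= => /andP[/ltW].
have dfle : df c0 <= 0.
  rewrite /df /c /b.
  have := CS (G (x + c0 *: d) - G x) d.
  have := hG (x + c0 *: d) x.
  have -> : x + c0 *: d - x = c0 *: d by rewrite addrC addKr.
  rewrite enormZ ger0_norm // dotvBl.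
  have := enorm_ge0 d; have := enorm2 d; have := enorm_ge0 (G (x + c0 *: d) - G x).
  nra.
have p1 : psi 1 = h (x + 1 *: d) - (c * 1 + b * 1 ^+ 2) by [].
have p0 : psi 0 = h (x + 0 *: d) - (c * 0 + b * 0 ^+ 2) by [].
move: e; rewrite p1 p0 scale1r scale0r addr0 expr1n expr0n /= !mulr1 !mulr0 !addr0 subr0 => e.
rewrite subr0 mulr1 in e.
have := dfle; rewrite -e; lra.
Qed.

End Anal3.
Section SC.
Variables (R : realType) (n : nat).
Local Notation vec := 'rV[R]_n.

Ltac dexp := rewrite ?(dotvDl, dotvDr, dotvZl, dotvZr, dotvBl, dotvBr, dotvNl, dotvNr).

Lemma sc_comb (mu : R) (h : vec -> R) (x y : vec) (t : R) :
  strongly_convex mu h -> 0 <= t <= 1 ->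
  h (t *: y + (1 - t) *: x) <=
    t * h y + (1 - t) * h x - mu / 2 * (t * (1 - t)) * dotv (y - x) (y - x).
Proof.
move=> hc ht; have := hc y x t ht.
rewrite /= !enorm2; dexp.
rewrite (dotvC x y).
set yy := dotv y y; set xx := dotv x x; set xy := dotv y x.
move=> H.
have E : t * (h y - mu / 2 * yy) + (1 - t) * (h x - mu / 2 * xx)
  + mu / 2 * (t * (t * yy + (1 - t) * xy) + (1 - t) * (t * xy + (1 - t) * xx))
  = t * h y + (1 - t) * h x - mu / 2 * (t * (1 - t)) * (yy - xy - (xy - xx)).
  by ring.
lra.
Qed.

Lemma sc_grad (mu : R) (h : vec -> R) (G : vec -> vec) (x y : vec) :
  strongly_convex mu h -> (forall z v, is_derive z v h (dotv (G z) v)) ->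
  h x + dotv (G x) (y - x) + mu / 2 * dotv (y - x) (y - x) <= h y.
Proof.
move=> hc hd.
set d := y - x; set dd := dotv d d.
have := @deriv_bound R n h x d (dotv (G x) d) (h y - h x - mu / 2 * dd) (mu / 2 * dd)
  (hd x d).
have H : forall t, 0 < t < 1 ->
    h (x + t *: d) <= h x + t * (h y - h x - mu / 2 * dd) + t ^+ 2 * (mu / 2 * dd).
  move=> t /andP[t0 t1].
  have -> : x + t *: d = t *: y + (1 - t) *: x.
    by rewrite /d scalerBr scalerBl scale1r addrCA.
  have := sc_comb x y hc (ltac:(by rewrite ltW // ltW) : 0 <= t <= 1).
  rewrite -/d -/dd => H; apply: le_trans H _.
  rewrite expr2; lra.
move=> /(_ H); lra.
Qed.

End SC.
Section Prox.
Variables (R : realType) (n : nat).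
Local Notation vec := 'rV[R]_n.
Ltac dexp := rewrite ?(dotvDl, dotvDr, dotvZl, dotvZr, dotvBl, dotvBr, dotvNl, dotvNr).

Lemma real_lim (a b c : R) : (forall t, 0 < t < 1 -> a <= b + t * c) -> a <= b.
Proof.
move=> H; apply/ler_addgt0Pr => e e0.
set c' := `|c| + 1.
have c'0 : 0 < c' by rewrite /c' ltr_pwDr // normr_ge0.
set t := e / (e + c').
have t0 : 0 < t by rewrite divr_gt0 // addr_gt0.
have t1 : t < 1.
  rewrite /t (ltr_pdivrMr _ _ (addr_gt0 e0 c'0)); lra.
have := H t (ltac:(by rewrite t0 t1)).
have : t * c <= t * c'.
  by rewrite ler_pM2l // /c' (le_trans (ler_norm c)) // lerDl.
have : t * c' <= e.
  rewrite /t mulrAC (ler_pdivrMr _ _ (addr_gt0 e0 c'0)) ler_pM2l //; lra.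
lra.
Qed.

Lemma prox_ineq (rv : vec -> R) (dom : vec -> Prop) (eta : R) (y p z : vec) :
  0 < eta -> dom p -> dom z ->
  (forall a b t, dom a -> dom b -> 0 < t < 1 ->
     dom (t *: a + (1 - t) *: b) /\ rv (t *: a + (1 - t) *: b) <= t * rv a + (1 - t) * rv b) ->
  (forall w, dom w -> 2^-1 * dotv (p - y) (p - y) + eta * rv p
                      <= 2^-1 * dotv (w - y) (w - y) + eta * rv w) ->
  eta * (rv p - rv z) <= dotv (p - y) (z - p).
Proof.
move=> eta0 dp dz hconv hprox.
apply: (@real_lim _ _ (2^-1 * dotv (z - p) (z - p))) => t /andP[t0 t1].
have [dw hw] := hconv z p t dz dp (ltac:(by rewrite t0 t1)).
have := hprox _ dw.
have -> : t *: z + (1 - t) *: p - y = (p - y) + t *: (z - p).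
  by apply/matrixP => i j; rewrite !mxE; ring.
move: (p - y) (z - p) => P Z.
rewrite dotvDl !dotvDr !dotvZl !dotvZr (dotvC Z P).
set PP := dotv P P; set PZ := dotv P Z; set ZZ := dotv Z Z.
move=> H.
have H2 : eta * rv (t *: z + (1 - t) *: p) <= eta * (t * rv z + (1 - t) * rv p).
  by rewrite ler_pM2l.
have H3 : t * (eta * (rv p - rv z)) <= t * (PZ + t * (2^-1 * ZZ)) by nra.
by rewrite ler_pM2l in H3.
Qed.

End Prox.
Section Step.
Variables (R : realType) (n : nat).
Local Notation vec := 'rV[R]_n.
Variables (h : vec -> R) (G : vec -> vec) (rv : vec -> R) (L mu eta : R).
Hypothesis hd : forall z v, is_derive z v h (dotv (G z) v).
Hypothesis hL0 : 0 <= L.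
Hypothesis hG : forall u v, enorm (G u - G v) <= L * enorm (u - v).
Hypothesis hsc : strongly_convex mu h.
Hypothesis heta : 0 < eta.

Lemma step_basic (xk D e u : vec) :
  eta * (rv (xk + D) - rv xk) <=
    dotv (xk + D - (xk - eta *: (G xk + e))) (xk - (xk + D)) ->
  eta * (rv (xk + D) - rv (xk + u)) <=
    dotv (xk + D - (xk - eta *: (G xk + e))) (xk + u - (xk + D)) ->
  eta * ((h (xk + D) + rv (xk + D)) - (h xk + rv xk)) <=
     eta * (L / 2 * dotv D D) - dotv D D - eta * dotv e D /\
  eta * ((h (xk + D) + rv (xk + D)) - (h (xk + u) + rv (xk + u))) <=
     eta * (- (mu / 2 * dotv u u)) + eta * (L / 2 * dotv D D) + (dotv D u - dotv D D)
     + eta * (dotv e u - dotv e D).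
Proof.
have E1 : xk + D - (xk - eta *: (G xk + e)) = D + eta *: G xk + eta *: e.
  by apply/matrixP => i j; rewrite !mxE; ring.
have E2 : xk - (xk + D) = - D by apply/matrixP => i j; rewrite !mxE; ring.
have E3 : xk + u - (xk + D) = u - D by apply/matrixP => i j; rewrite !mxE; ring.
have E4 : xk + u - xk = u by apply/matrixP => i j; rewrite !mxE; ring.
rewrite E1 E2 E3.
have desc := descent xk D hd hL0 hG.
have sg := sc_grad xk (xk + u) hsc hd.
rewrite E4 in sg.
move: desc sg; move: (G xk) => q desc sg.
rewrite !(dotvDl, dotvZl, dotvNr, dotvBr) !(dotvC q D, dotvC q e, dotvC q u, dotvC D e, dotvC u e).
move=> H1 H2.
rewrite (dotvC q D) in desc; rewrite (dotvC q u) in sg.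
have hn : eta != 0 by rewrite gt_eqF.
have D1 := ler_wpM2l (ltW heta) desc.
have S1 := ler_wpM2l (ltW heta) sg.
split; lra.
Qed.

End Step.
Section RealStep.
Variable R : realType.

Lemma real_step (eta mu L Fp Fk dd uu ee eD eu Du : R) :
  0 < eta -> 0 < mu -> mu <= L -> eta * L <= 1 -> 0 <= Fk -> 0 <= dd -> 0 <= uu -> 0 <= ee ->
  eta * (Fp - Fk) <= eta * (L / 2 * dd) - dd - eta * eD ->
  eta * Fp <= eta * (- (mu / 2 * uu)) + eta * (L / 2 * dd) + (Du - dd) + eta * (eu - eD) ->
  eta * mu * Du <= (eta * mu / 2) ^+ 2 * uu + dd ->
  mu * eu <= (mu / 2) ^+ 2 * uu + ee ->
  - (4 * eta * (3 - 2 * (eta * L))) * eD <= 4 * eta ^+ 2 * ee + (3 - 2 * (eta * L)) ^+ 2 * dd ->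
  (3 - 2 * (eta * L)) * eta * Fp <=
    (3 - 2 * (eta * L)) * eta * (1 - eta * mu / 4) * Fk + eta ^+ 2 * (1 + (3 - 2 * (eta * L)) / 4) * ee.
Proof.
move=> e0 m0 mL eL Fk0 dd0 uu0 ee0 Hi Hii Y1 Y2 Y3.
set th := eta * mu / 4.
have th0 : 0 <= th by rewrite /th; apply: divr_ge0 => //; apply: mulr_ge0; apply: ltW.
have emu : eta * mu <= eta * L by rewrite ler_pM2l.
have th1 : 0 <= 1 - th by rewrite /th; lra.
have i1 := ler_wpM2l th1 Hi.
have i2 := ler_wpM2l th0 Hii.
have y2 := ler_wpM2l (sqr_ge0 eta) Y2.
have A : eta * Fp <= eta * (1 - th) * Fk + (eta * L / 2 - 3 / 4) * dd - eta * eD + eta ^+ 2 / 4 * ee.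
  rewrite /th in i1 i2 *.
  have E : eta ^+ 2 * (mu * eu) = eta * mu * (eta * eu) by ring.
  nra.
set P := 3 - 2 * (eta * L).
have P0 : 0 < P by rewrite /P; lra.
have B := ler_wpM2l (ltW P0) A.
rewrite /P in B Y3 *. nra.
Qed.

End RealStep.
From mathcomp Require Import zify.
Section Sums.
Variable R : realType.
Implicit Types (g : nat -> R).

Lemma sum_sub_range g a a' b' b : (a <= a')%N -> (a' <= b')%N -> (b' <= b)%N ->
  (forall j, (a <= j < b)%N -> 0 <= g j) ->
  \sum_(a' <= j < b') g j <= \sum_(a <= j < b) g j.
Proof.
move=> h1 h2 h3 hg.
rewrite (@big_cat_nat _ _ _ a' a b) //; last exact: leq_trans h2 h3.
rewrite (@big_cat_nat _ _ _ b' a' b) //=.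
have p1 : 0 <= \sum_(a <= j < a') g j.
  rewrite big_nat_cond; apply: sumr_ge0 => j /andP[/andP[j1 j2] _]; apply: hg.
  by apply/andP; split => //; apply: leq_trans j2 (leq_trans h2 h3).
have p2 : 0 <= \sum_(b' <= j < b) g j.
  rewrite big_nat_cond; apply: sumr_ge0 => j /andP[/andP[j1 j2] _]; apply: hg.
  by apply/andP; split => //; apply: leq_trans (leq_trans h1 h2) j1.
lra.
Qed.

Lemma sum_shift_sub g c s k : (c <= s)%N ->
  \sum_(s <= l < k) g (l - c)%N = \sum_(s - c <= j < k - c) g j.
Proof.
move=> cs; rewrite -{1}(subnK cs) big_addn.
by apply: eq_bigr => i _; rewrite addnK.
Qed.

Lemma sum_shift_add g c s k :
  \sum_(s <= l < k) g (l + c)%N = \sum_(s + c <= j < k + c) g j.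
Proof. by rewrite big_addn addnK. Qed.

Lemma window_double (d : nat -> R) (K s k : nat) :
  (K <= s)%N -> (s <= k)%N -> (forall j, 0 <= d j) ->
  \sum_(s <= l < k) \sum_(l - K <= j < l) d j <= K%:R * \sum_(s - K <= j < k) d j.
Proof.
move=> Ks sk d0.
have inner : forall l, (K <= l)%N ->
    \sum_(l - K <= j < l) d j = \sum_(i < K) d ((l - K) + i)%N.
  move=> l Kl; rewrite -{1}[(l - K)%N]add0n big_addn subKn // big_mkord.
  by apply: eq_bigr => i _; rewrite addnC.
rewrite (eq_big_nat _ _ (F2 := fun l => \sum_(i < K) d ((l - K) + i)%N)); last first.
  move=> l /andP[l1 l2]; apply: inner; exact: leq_trans Ks l1.
rewrite exchange_big /=.
have -> : K%:R * \sum_(s - K <= j < k) d j = \sum_(i < K) \sum_(s - K <= j < k) d j.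
  by rewrite sumr_const card_ord mulr_natl.
apply: ler_sum => i _.
have := sum_shift_sub (fun j => d (j + i)%N) k Ks; rewrite /= => ->.
rewrite sum_shift_add.
have := ltn_ord i => iK.
apply: sum_sub_range => //; try lia.
Qed.

Lemma telescopeN (F : nat -> R) s k : (s <= k)%N ->
  \sum_(s <= j < k) (F j - F j.+1) = F s - F k.
Proof.
move=> sk; have := telescope_sumr F sk.
have -> : \sum_(s <= j < k) (F j - F j.+1) = - \sum_(s <= j < k) (F j.+1 - F j).
  by rewrite -sumrN; apply: eq_bigr => j _; rewrite opprB.
move=> ->; by rewrite opprB.
Qed.

End Sums.
Section Comb.
Variables (R : realType) (F d ee : nat -> R) (eta L mu : R) (K a k : nat).
Hypothesis heta : 0 < eta.
Hypothesis hL : 0 < L.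
Hypothesis hmu : 0 < mu.
Hypothesis hK : (1 <= K)%N.
Hypothesis ha : (2 <= a)%N.
Hypothesis hk : (a * K + 1 <= k)%N.
Hypothesis hcond : eta * L * K%:R + eta * L <= 1.
Hypothesis hF : forall j, (k - a * K <= j)%N -> 0 <= F j.
Hypothesis hd : forall j, 0 <= d j.
Hypothesis hP1 : (1 + eta * mu / 8) * F k.+1 <= F k + eta * ee k.
Hypothesis hP2 : forall j, (k - a * K <= j)%N ->
  (1 - eta * L) * d j <= 2 * eta * (F j - F j.+1) + eta ^+ 2 * ee j.
Hypothesis hP3 : forall l, ee l <= L ^+ 2 * K%:R * \sum_(l - K <= j < l) d j.
Hypothesis hP4 : forall j, (k - a * K <= j)%N -> mu * d j <= 4 * (F j + F j.+1).

Let z := eta * K%:R * L.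
Let eps i := 2 * eta * L * z ^+ (i - 1).
Let c i := L * (1 - eta * L) * z ^+ (i - 1).
Let T i := \sum_(k - i * K <= j < k) d j.

Lemma T_ge0 i : 0 <= T i.
Proof. by rewrite /T big_nat_cond; apply: sumr_ge0 => j _; exact: hd. Qed.

Lemma z_ge0 : 0 <= z.
Proof. by rewrite /z; apply: mulr_ge0; [apply: mulr_ge0 => //; apply: ltW|apply: ltW]. Qed.

Lemma level_step N : (1 <= N)%N -> (N < a)%N ->
  c N * T N <= eps N * (F (k - N * K)%N - F k) + c N.+1 * T N.+1.
Proof.
move=> N1 Na.
have hNK : (N.+1 * K <= a * K)%N by rewrite leq_mul2r Na orbT.
have hsK : (K <= k - N * K)%N.
  move: hNK; rewrite mulSn => hNK. have := hk. clear -hNK. lia.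
have hsk : (k - N * K <= k)%N by apply: leq_subr.
have hsa : (k - a * K <= k - N * K)%N by apply: leq_sub2l; rewrite leq_mul2r ltnW ?orbT.
set s := (k - N * K)%N in hsK hsk hsa *.
have e1 : (s - K)%N = (k - N.+1 * K)%N by rewrite /s mulSn addnC subnDA.
have S2 : (1 - eta * L) * T N <= 2 * eta * (F s - F k) + eta ^+ 2 * \sum_(s <= j < k) ee j.
  rewrite /T -/s mulr_sumr -telescopeN // mulr_sumr mulr_sumr -big_split /=.
  apply: ler_sum_nat => j /andP[j1 j2]; apply: hP2; exact: leq_trans hsa j1.
have S3 : \sum_(s <= j < k) ee j <= L ^+ 2 * K%:R * (K%:R * T N.+1).
  apply: le_trans (_ : \sum_(s <= j < k) (L ^+ 2 * K%:R * \sum_(j - K <= i < j) d i) <= _).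
    by apply: ler_sum_nat => j _; exact: hP3.
  rewrite -mulr_sumr; apply: ler_wpM2l.
    by apply: mulr_ge0; [exact: sqr_ge0|exact: ler0n].
  by rewrite /T -e1; apply: window_double.
have X0 : 0 <= z ^+ (N - 1) by apply: exprn_ge0; exact: z_ge0.
have TN0 := T_ge0 N; have TN1 := T_ge0 N.+1.
rewrite /c /eps.
have -> : (N.+1 - 1)%N = (N - 1).+1 by lia.
rewrite exprS.
set X := z ^+ (N - 1) in X0 *.
set TT := T N.+1 in TN1 S3 *.
set SE := \sum_(s <= j < k) ee j in S2 S3.
have K0 : 0 <= K%:R :> R by [].
have Hc : eta * L * K%:R <= 1 - eta * L.
  have := hcond. lra.
have LX : 0 <= L * X by apply: mulr_ge0 => //; exact: ltW.
have A1 : L * X * ((1 - eta * L) * T N) <= L * X * (2 * eta * (F s - F k) + eta ^+ 2 * SE).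
  exact: ler_wpM2l.
have A2 : L * X * (eta ^+ 2 * SE) <= L * X * (eta ^+ 2 * (L ^+ 2 * K%:R * (K%:R * TT))).
  apply: ler_wpM2l => //; apply: ler_wpM2l => //; exact: sqr_ge0.
have A3 : L * X * (eta ^+ 2 * (L ^+ 2 * K%:R * (K%:R * TT))) <=
     L * (1 - eta * L) * (z * X) * TT.
  have E : L * X * (eta ^+ 2 * (L ^+ 2 * K%:R * (K%:R * TT))) =
     (L * X * z * TT) * (eta * L * K%:R) by rewrite /z; ring.
  have E2 : L * (1 - eta * L) * (z * X) * TT =
     (L * X * z * TT) * (1 - eta * L) by ring.
  rewrite E E2; apply: ler_wpM2l => //.
  have := z_ge0; move=> zz.
  by apply: mulr_ge0 => //; apply: mulr_ge0.
have E3 : L * (1 - eta * L) * X * T N = L * X * ((1 - eta * L) * T N) by ring.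
have E4 : L * X * (2 * eta * (F s - F k) + eta ^+ 2 * SE) =
   2 * eta * L * X * (F s - F k) + L * X * (eta ^+ 2 * SE) by ring.
lra.
Qed.

Lemma level i : (1 <= i)%N -> (i <= a)%N ->
  (1 + eta * mu / 8) * F k.+1 <=
    F k + \sum_(1 <= l < i) eps l * (F (k - l * K)%N - F k) + c i * T i.
Proof.
elim: i => [//|i IH] _ hia.
case: i IH hia => [|i] IH hia.
  rewrite big_geq // addr0 /c /T subnn expr0 mulr1 mul1n.
  have := hP3 k; have := hcond; have := T_ge0 1; rewrite /T mul1n.
  set t := \sum_(k - K <= j < k) d j => t0 hc hk3.
  have h1 : eta * ee k <= eta * (L ^+ 2 * K%:R * t) by rewrite ler_pM2l.
  have h2 : eta * (L ^+ 2 * K%:R * t) <= L * (1 - eta * L) * t.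
    have -> : eta * (L ^+ 2 * K%:R * t) = L * (eta * L * K%:R) * t by ring.
    apply: ler_wpM2r => //; apply: ler_wpM2l; [exact: ltW|lra].
  have := hP1; lra.
rewrite big_nat_recr //=.
have := IH isT (ltnW hia).
have := level_step (ltn0Sn i) hia.
lra.
Qed.

Lemma comb_final :
  (1 + eta * mu / 8) * F k.+1 <=
    F k + \sum_(1 <= l < a) eps l * (F (k - l * K)%N - F k)
    + 4 * K%:R * (L / mu) * eps (a - 1)%N * \sum_(k - a * K <= j < k.+1) F j.
Proof.
have := level (ltnW ha) (leqnn a).
suff : c a * T a <= 4 * K%:R * (L / mu) * eps (a - 1)%N * \sum_(k - a * K <= j < k.+1) F j.
  lra.
set S := \sum_(k - a * K <= j < k.+1) F j.
have hka : (k - a * K <= k)%N by apply: leq_subr.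
have Fge : forall j, (k - a * K <= j < k.+1)%N -> 0 <= F j.
  by move=> j /andP[j1 _]; exact: hF.
have S1 : \sum_(k - a * K <= j < k) F j <= S.
  apply: sum_sub_range => //; exact: leqnSn.
have S2 : \sum_(k - a * K <= j < k) F j.+1 <= S.
  have -> : \sum_(k - a * K <= j < k) F j.+1 = \sum_(k - a * K <= j < k) F (j + 1)%N.
    by apply: eq_bigr => j _; rewrite addn1.
  rewrite sum_shift_add; apply: sum_sub_range => //; rewrite ?addn1 //; exact: leqnSn.
have TT : mu * T a <= 8 * S.
  rewrite /T mulr_sumr.
  apply: le_trans (_ : \sum_(k - a * K <= j < k) (4 * (F j + F j.+1)) <= _).
    by apply: ler_sum_nat => j /andP[j1 _]; exact: hP4.
  rewrite -mulr_sumr big_split /=; lra.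
have Ta0 := T_ge0 a.
have z0 := z_ge0.
rewrite /c /eps.
have ex : z ^+ (a - 1) = z * z ^+ (a - 1 - 1).
  by rewrite -exprS; congr (_ ^+ _); lia.
rewrite ex.
set X := z ^+ (a - 1 - 1).
have X0 : 0 <= X by apply: exprn_ge0.
have hc := hcond.
have e1 : L * (1 - eta * L) * (z * X) * T a = (L * (1 - eta * L) * z * X / mu) * (mu * T a).
  by field; rewrite gt_eqF.
have e2 : 4 * K%:R * (L / mu) * (2 * eta * L * X) * S = (L * z * X / mu) * (8 * S).
  by rewrite /z; field; rewrite gt_eqF.
rewrite e1 e2.
have p1 : 0 <= L * (1 - eta * L) * z * X / mu.
  apply: divr_ge0; last exact: ltW.
  apply: mulr_ge0 => //; apply: mulr_ge0 => //; apply: mulr_ge0; [exact: ltW|].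
  have : 0 <= eta * L * K%:R by apply: mulr_ge0 => //; apply: mulr_ge0; apply: ltW.
  lra.
apply: le_trans (ler_wpM2l p1 TT) _.
apply: ler_wpM2r.
  have := Fge; rewrite /S big_nat_cond => hh.
  apply: mulr_ge0 => //.
  by apply: sumr_ge0 => j /andP[jj _]; apply: hh.
rewrite ler_pdivrMr // mulrAC divfK ?gt_eqF //.
have LzX : 0 <= L * z * X by apply: mulr_ge0 => //; apply: mulr_ge0 => //; exact: ltW.
have : 0 <= eta * L by apply: mulr_ge0; apply: ltW.
nra.
Qed.

End Comb.
Lemma sq_sum_nat (R : realType) (w : nat -> R) (a b : nat) :
  (forall j, 0 <= w j) ->
  (\sum_(a <= j < b) w j) ^+ 2 <= (b - a)%:R * \sum_(a <= j < b) w j ^+ 2.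
Proof.
move=> w0.
have e : forall g : nat -> R, \sum_(a <= j < b) g j = \sum_(i < b - a) g (i + a)%N.
  by move=> g; rewrite -{1}[a]add0n big_addn big_mkord.
rewrite (e w) (e (fun j => w j ^+ 2)).
exact: sq_sum_ord.
Qed.

Section Avg.
Variables (R : realType) (n m : nat).
Local Notation vec := 'rV[R]_n.
Variables (fi : 'I_m -> vec -> R) (gfi : 'I_m -> vec -> vec) (Li : 'I_m -> R).
Local Open Scope classical_set_scope.

Lemma avg_derive : (forall i, is_gradient (fi i) (gfi i)) ->
  forall y v, is_derive y v (fun z => m%:R^-1 * \sum_(i < m) fi i z)
                          (dotv (m%:R^-1 *: \sum_(i < m) gfi i y) v).
Proof.
move=> hg y v.
have hi : forall i, is_derive y v (fi i) (dotv (gfi i y) v).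
  move=> i; have [d1 d2] := hg i y; split.
    exact: diff_derivable.
  by rewrite deriveE // d2.
have h1 := is_derive_sum hi.
have h2 := is_deriveZ (m%:R^-1) h1.
have -> : (fun z => m%:R^-1 * \sum_(i < m) fi i z) = m%:R^-1 \*: \sum_(i < m) fi i.
  by apply/funext => z /=; rewrite fct_sumE.
apply: is_derive_eq.
by rewrite dotvZl dotv_suml.
Qed.

Lemma avg_lip (p q : 'I_m -> vec) :
  (forall i, 0 <= Li i) ->
  (forall i u v, enorm (gfi i u - gfi i v) <= Li i * enorm (u - v)) ->
  enorm (m%:R^-1 *: \sum_(i < m) gfi i (p i) - m%:R^-1 *: \sum_(i < m) gfi i (q i))
   <= m%:R^-1 * \sum_(i < m) Li i * enorm (p i - q i).
Proof.
move=> L0 hL.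
rewrite -scalerBr -sumrB enormZ ger0_norm ?invr_ge0 //.
apply: ler_wpM2l; first by rewrite invr_ge0.
apply: le_trans (enorm_sum _ _ _) _.
by apply: ler_sum => i _; exact: hL.
Qed.

End Avg.
Section Flow.
Variables (R : realType) (n : nat).
Local Notation vec := 'rV[R]_n.

Lemma F_lower (h rv : vec -> R) (dom : vec -> Prop) (mu : R) (xs y : vec) :
  strongly_convex mu h ->
  (forall a b t, dom a -> dom b -> 0 < t < 1 ->
     dom (t *: a + (1 - t) *: b) /\ rv (t *: a + (1 - t) *: b) <= t * rv a + (1 - t) * rv b) ->
  (forall w, dom w -> h xs + rv xs <= h w + rv w) -> dom xs -> dom y ->
  h xs + rv xs + mu / 2 * dotv (y - xs) (y - xs) <= h y + rv y.
Proof.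
move=> hsc hconv hmin dxs dy.
apply: (@real_lim _ _ _ (mu / 2 * dotv (y - xs) (y - xs))) => t /andP[t0 t1].
have [dw hw] := hconv y xs t dy dxs (ltac:(by rewrite t0 t1)).
have := hmin _ dw.
have := sc_comb xs y hsc (ltac:(by rewrite ltW // ltW) : 0 <= t <= 1).
set dd := dotv (y - xs) (y - xs) => H1 H2.
have : t * (mu / 2 * dd) <= t * (h y + rv y - (h xs + rv xs) + t * (mu / 2 * dd)).
  nra.
rewrite ler_pM2l //; lra.
Qed.

End Flow.
Section Ext.
Variables (R : realType) (n : nat).
Local Notation vec := 'rV[R]_n.
Variable r : vec -> \bar R.
Hypothesis hprop : proper_fun r.

Lemma nfin_pinfty p : ~~ (r p \is a fin_num) -> r p = +oo%E.
Proof.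
rewrite fin_numE negb_and (hprop.1 p) /= negbK => /eqP //.
Qed.

Lemma fin_of_le_fin p (c : R) : (r p <= c%:E)%E -> r p \is a fin_num.
Proof.
move=> h; apply/negPn/negP => /nfin_pinfty e.
by move: h; rewrite e leye_eq.
Qed.

Lemma prox_dom (eta : R) (y p : vec) : 0 < eta -> is_prox r eta y p -> r p \is a fin_num.
Proof.
move=> e0 hp; apply/negPn/negP => /nfin_pinfty e.
have [z0 fz0] := hprop.2.
by have := hp z0; rewrite e -(fineK fz0) -EFinM -EFinD mulry gtr0_sg // mul1e addey // leye_eq.
Qed.

Lemma conv_dom (a b : vec) (t : R) : convex_efun r ->
  r a \is a fin_num -> r b \is a fin_num -> 0 < t < 1 ->
  r (t *: a + (1 - t) *: b) \is a fin_num /\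
  fine (r (t *: a + (1 - t) *: b)) <= t * fine (r a) + (1 - t) * fine (r b).
Proof.
move=> hc fa fb ht; have := hc a b t ht.
rewrite -(fineK fa) -(fineK fb) -!EFinM -EFinD => h.
have fw := fin_of_le_fin h.
split => //; by rewrite -lee_fin (fineK fw).
Qed.

Lemma prox_real (eta : R) (y p w : vec) : is_prox r eta y p ->
  r p \is a fin_num -> r w \is a fin_num ->
  2^-1 * dotv (p - y) (p - y) + eta * fine (r p) <=
    2^-1 * dotv (w - y) (w - y) + eta * fine (r w).
Proof.
move=> hp fp fw; have := hp w.
rewrite -(fineK fp) -(fineK fw) -!EFinM -!EFinD lee_fin !enorm2 //.
Qed.

End Ext.
Section P1R.
Variable R : realType.
Lemma P1_from (eta mu L Fp Fk ee : R) : 0 < eta -> 0 < mu -> mu <= L -> eta * L * 2 <= 1 ->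
  0 <= Fk -> 0 <= ee ->
  (3 - 2 * (eta * L)) * eta * Fp <=
       (3 - 2 * (eta * L)) * eta * (1 - eta * mu / 4) * Fk +
       eta ^+ 2 * (1 + (3 - 2 * (eta * L)) / 4) * ee ->
  (1 + eta * mu / 8) * Fp <= Fk + eta * ee.
Proof.
move=> e0 m0 mL eL Fk0 ee0 H.
set P := 3 - 2 * (eta * L) in H.
have emu : eta * mu <= eta * L by rewrite ler_pM2l.
have P2 : 2 <= P by rewrite /P; lra.
have Pe : 0 < P * eta by apply: mulr_gt0 => //; lra.
rewrite -(ler_pM2l Pe).
have nu0 : 0 <= eta * mu by apply: mulr_ge0; apply: ltW.
have c1 : 0 <= 1 + eta * mu / 8 by lra.
have H2 := ler_wpM2l c1 H.
have A : (1 + eta * mu / 8) * (P * eta * (1 - eta * mu / 4) * Fk) <= P * eta * Fk.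
  have -> : (1 + eta * mu / 8) * (P * eta * (1 - eta * mu / 4) * Fk) =
    (P * eta * Fk) * ((1 + eta * mu / 8) * (1 - eta * mu / 4)) by ring.
  rewrite -[X in _ <= X]mulr1; apply: ler_wpM2l.
    by apply: mulr_ge0 => //; apply: ltW.
  nra.
have B : (1 + eta * mu / 8) * (eta ^+ 2 * (1 + P / 4) * ee) <= P * eta * (eta * ee).
  have -> : (1 + eta * mu / 8) * (eta ^+ 2 * (1 + P / 4) * ee) =
    (eta ^+ 2 * ee) * ((1 + eta * mu / 8) * (1 + P / 4)) by ring.
  have -> : P * eta * (eta * ee) = (eta ^+ 2 * ee) * P by ring.
  apply: ler_wpM2l; first by apply: mulr_ge0 => //; exact: sqr_ge0.
  nra.
have E : P * eta * ((1 + eta * mu / 8) * Fp) = (1 + eta * mu / 8) * (P * eta * Fp) by ring.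
rewrite E mulrDr.
have E2 : (1 + eta * mu / 8) * (P * eta * (1 - eta * mu / 4) * Fk + eta ^+ 2 * (1 + P / 4) * ee)
  = (1 + eta * mu / 8) * (P * eta * (1 - eta * mu / 4) * Fk) + (1 + eta * mu / 8) * (eta ^+ 2 * (1 + P / 4) * ee) by ring.
rewrite E2 in H2.
lra.
Qed.

Lemma P1_from0 (eta mu L Fp Fk : R) : 0 < eta -> 0 < mu -> mu <= L -> eta * L <= 1 ->
  0 <= Fk ->
  (3 - 2 * (eta * L)) * eta * Fp <=
       (3 - 2 * (eta * L)) * eta * (1 - eta * mu / 4) * Fk +
       eta ^+ 2 * (1 + (3 - 2 * (eta * L)) / 4) * 0 ->
  (1 + eta * mu / 8) * Fp <= Fk.
Proof.
move=> e0 m0 mL eL Fk0; rewrite mulr0 addr0.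
set P := 3 - 2 * (eta * L).
have emu : eta * mu <= eta * L by rewrite ler_pM2l.
have Pe : 0 < P * eta by apply: mulr_gt0 => //; rewrite /P; lra.
move=> H.
have H' : Fp <= (1 - eta * mu / 4) * Fk.
  by rewrite -(ler_pM2l Pe) mulrA.
have nu0 : 0 <= eta * mu by apply: mulr_ge0; apply: ltW.
have c1 : 0 <= 1 + eta * mu / 8 by lra.
have H2 := ler_wpM2l c1 H'.
apply: le_trans H2 _.
rewrite mulrA -[X in _ <= X]mul1r; apply: ler_wpM2r => //.
nra.
Qed.
End P1R.

Unset Implicit Arguments.
Set Strict Implicit.

Theorem corollary1 (R : realType) (m n : nat)
  (fi : 'I_m -> 'rV[R]_n -> R) (gfi : 'I_m -> 'rV[R]_n -> 'rV[R]_n)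
  (Li : 'I_m -> R) (mu : R) (r : 'rV[R]_n -> \bar R) (xstar : 'rV[R]_n)
  (K : nat) (eta : R) (x : nat -> 'rV[R]_n) (tau : nat -> 'I_m -> nat) (a : nat) :
  (1 <= m)%N -> (1 <= n)%N ->
  (forall i, is_gradient (fi i) (gfi i)) ->
  (forall i, continuous (gfi i)) ->
  (forall i, 0 <= Li i) ->
  (forall i u v, enorm (gfi i u - gfi i v) <= Li i * enorm (u - v)) ->
  let f := fun y => m%:R^-1 * \sum_(i < m) fi i y in
  let L := m%:R^-1 * \sum_(i < m) Li i in
  0 < mu -> strongly_convex mu f ->
  proper_fun r -> closed_fun r -> convex_efun r ->
  let F := fun y => ((f y)%:E + r y)%E in
  (forall y, (F xstar <= F y)%E) ->
  (forall k i, (k - K <= tau k i <= k)%N) ->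
  let g := fun k => m%:R^-1 *: \sum_(i < m) gfi i (x (tau k i)) in
  (forall k, is_prox r eta (x k - eta *: g k) (x k.+1)) ->
  let Fk := fun k => fine (F (x k)) - fine (F xstar) in
  let Q := L / mu in
  0 < eta -> eta <= (L * (K.+1)%:R)^-1 ->
  (2 <= a)%N ->
  let eps := fun i : nat => 2 * eta * L * (eta * K%:R * L) ^+ (i - 1) in
  forall k : nat, (a * K + 1 <= k)%N ->
    (1 + eta * mu / 8) * Fk k.+1 <=
      (1 - \sum_(1 <= i < a) eps i) * Fk k
      + \sum_(1 <= i < a) eps i * Fk (k - i * K)%N
      + 4 * K%:R * Q * eps (a - 1)%N * \sum_(k - a * K <= j < k.+1) Fk j.
Proof.
move=> hm hn hgrad hcont hLi0 hLip f L hmu hsc hprop hclosed hconv F hmin htau g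
  hprox Fk Q heta hetaL ha eps k hk.
pose G := fun y => m%:R^-1 *: \sum_(i < m) gfi i y.
have hd : forall y v, is_derive y v f (dotv (G y) v) by exact: avg_derive.
have L0 : 0 <= L.
  by rewrite /L; apply: mulr_ge0; [rewrite invr_ge0 | apply: sumr_ge0].
have hG : forall u v, enorm (G u - G v) <= L * enorm (u - v).
  move=> u v; apply: le_trans (avg_lip (fun _ => u) (fun _ => v) hLi0 hLip) _.
  by rewrite /L -mulrA mulr_suml.
have Lpos : 0 < L.
  rewrite lt_def L0 andbT; apply/eqP => L00.
  by move: hetaL; rewrite L00 mul0r invr0 => h; lra.
have hcond : eta * L * K%:R + eta * L <= 1.
  have p : 0 < L * (K.+1)%:R by rewrite mulr_gt0.
  move: hetaL; rewrite -(ler_pM2r p) mulVf ?gt_eqF // -natr1 => h; lra.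
have muL : mu <= L.
  pose d : 'rV[R]_n := const_mx 1.
  have dd0 : 0 < dotv d d.
    rewrite /dotv (eq_bigr (fun _ => 1)); last by move=> i _; rewrite !mxE mulr1.
    by rewrite sumr_const card_ord ltr0n.
  have := sc_grad 0 d hsc hd; have := descent 0 d hd L0 hG.
  rewrite add0r subr0 => h1 h2.
  have : mu / 2 * dotv d d <= L / 2 * dotv d d by lra.
  by rewrite ler_pM2r // ler_pM2r.
pose dom := fun y => r y \is a fin_num.
pose rv := fun y => fine (r y).
have hconvR : forall a b t, dom a -> dom b -> 0 < t < 1 ->
    dom (t *: a + (1 - t) *: b) /\ rv (t *: a + (1 - t) *: b) <= t * rv a + (1 - t) * rv b.
  by move=> a0 b0 t da db ht; exact: conv_dom hprop a0 b0 t hconv da db ht.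
have domx : forall j, dom (x j.+1).
  move=> j; rewrite /dom; exact: (prox_dom hprop heta (hprox j)).
have domxs : dom xstar.
  have [z0 fz0] := hprop.2.
  apply/negPn/negP => /(nfin_pinfty hprop) e.
  by move: (hmin z0); rewrite /F e -(fineK fz0) -EFinD addey // leye_eq.
have hminR : forall w, dom w -> f xstar + rv xstar <= f w + rv w.
  by move=> w dw; have := hmin w; rewrite /F -(fineK domxs) -(fineK dw) -!EFinD lee_fin.
pose FA := fun j => f (x j) + rv (x j).
pose Fs := f xstar + rv xstar.
have FkE : forall j, Fk j.+1 = FA j.+1 - Fs.
  move=> j; rewrite /Fk /F -(fineK (domx j)) -(fineK domxs) -!EFinD /=.
  by [].
have Fk0 : forall j, 0 <= Fk j.+1.
  by move=> j; rewrite FkE; have := hminR _ (domx j); rewrite /FA /Fs; lra.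
have hproxR : forall j w, dom w ->
   2^-1 * dotv (x j.+1 - (x j - eta *: g j)) (x j.+1 - (x j - eta *: g j)) + eta * rv (x j.+1)
   <= 2^-1 * dotv (w - (x j - eta *: g j)) (w - (x j - eta *: g j)) + eta * rv w.
  by move=> j w dw; exact: prox_real (hprox j) (domx j) dw.
pose D := fun j => x j.+1 - x j.
pose e := fun j => g j - G (x j).
pose dd := fun j => dotv (D j) (D j).
pose ee := fun j => dotv (e j) (e j).
pose u := fun j => xstar - x j.
have basic : forall i,
  eta * (FA i.+2 - FA i.+1) <= eta * (L / 2 * dd i.+1) - dd i.+1 - eta * dotv (e i.+1) (D i.+1) /\
  eta * (FA i.+2 - Fs) <= eta * (- (mu / 2 * dotv (u i.+1) (u i.+1))) + eta * (L / 2 * dd i.+1)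
     + (dotv (D i.+1) (u i.+1) - dd i.+1) + eta * (dotv (e i.+1) (u i.+1) - dotv (e i.+1) (D i.+1)).
  move=> i.
  have pi1 := @prox_ineq R n rv dom eta (x i.+1 - eta *: g i.+1) (x i.+2) (x i.+1)
    heta (domx i.+1) (domx i) hconvR (hproxR i.+1).
  have pi2 := @prox_ineq R n rv dom eta (x i.+1 - eta *: g i.+1) (x i.+2) xstar
    heta (domx i.+1) domxs hconvR (hproxR i.+1).
  have := @step_basic R n f G rv L mu eta hd L0 hG hsc heta (x i.+1) (D i.+1) (e i.+1) (u i.+1).
  have E1 : x i.+1 + D i.+1 = x i.+2 by rewrite /D addrC subrK.
  have E2 : G (x i.+1) + e i.+1 = g i.+1 by rewrite /e addrC subrK.
  have E3 : x i.+1 + u i.+1 = xstar by rewrite /u addrC subrK.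
  rewrite E1 E2 E3 => /(_ pi1 pi2).
  by rewrite /FA /Fs /dd.
have P2 : forall j, (1 <= j)%N ->
    (1 - eta * L) * dd j <= 2 * eta * (Fk j - Fk j.+1) + eta ^+ 2 * ee j.
  move=> [//|i] _; have [b1 _] := basic i.
  have Y := young2 (e i.+1) (D i.+1) (- eta) 1.
  rewrite sqrrN expr1n !mulr1 mul1r in Y.
  rewrite !FkE /dd /ee; rewrite /dd in b1; lra.
have P4 : forall j, (1 <= j)%N -> mu * dd j <= 4 * (Fk j + Fk j.+1).
  move=> [//|i] _.
  have l1 := @F_lower R n f rv dom mu xstar (x i.+1) hsc hconvR hminR domxs (domx i).
  have l2 := @F_lower R n f rv dom mu xstar (x i.+2) hsc hconvR hminR domxs (domx i.+1).
  have eqD : D i.+1 = (x i.+2 - xstar) - (x i.+1 - xstar).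
    by rewrite /D; apply/matrixP => p q; rewrite !mxE; ring.
  have hp := dotv_par (x i.+2 - xstar) (x i.+1 - xstar).
  rewrite -eqD in hp.
  have a1 := dotv_ge0 (x i.+1 - xstar); have a2 := dotv_ge0 (x i.+2 - xstar).
  rewrite !FkE /FA /Fs /dd.
  have hm2 := ler_wpM2l (ltW hmu) hp.
  lra.
have P3 : forall l, ee l <= L ^+ 2 * K%:R * \sum_(l - K <= j < l) dd j.
  move=> l.
  pose W := \sum_(l - K <= j < l) enorm (D j).
  have W0 : 0 <= W by rewrite /W big_nat_cond; apply: sumr_ge0 => j _; exact: enorm_ge0.
  have hl : forall i, enorm (x (tau l i) - x l) <= W.
    move=> i; have /andP[t1 t2] := htau l i.
    rewrite -enormN opprB.
    have -> : x l - x (tau l i) = \sum_(tau l i <= j < l) D j by rewrite /D telescope_sumr.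
    apply: le_trans (enorm_sum _ _ _) _.
    by apply: sum_sub_range => // j _; exact: enorm_ge0.
  have en : enorm (e l) <= L * W.
    apply: le_trans (avg_lip (fun i => x (tau l i)) (fun _ => x l) hLi0 hLip) _.
    rewrite /L -mulrA mulr_suml; apply: ler_wpM2l; first by rewrite invr_ge0.
    by apply: ler_sum => i _; apply: ler_wpM2l => //; exact: hl.
  have sq : ee l <= (L * W) ^+ 2.
    rewrite /ee -enorm2 (@ler_pXn2r _ 2) // ?nnegrE ?enorm_ge0 //.
    by rewrite mulr_ge0 // ltW.
  have sqW := @sq_sum_nat R (fun j => enorm (D j)) (l - K) l (fun j => enorm_ge0 _).
  have e2 : \sum_(l - K <= j < l) enorm (D j) ^+ 2 = \sum_(l - K <= j < l) dd j.
    by apply: eq_bigr => j _; rewrite enorm2.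
  rewrite e2 -/W in sqW.
  have Sdd : 0 <= \sum_(l - K <= j < l) dd j.
    by rewrite big_nat_cond; apply: sumr_ge0 => j _; exact: dotv_ge0.
  have kk : (l - (l - K))%:R <= K%:R :> R.
    by rewrite ler_nat leq_subLR addnC -leq_subLR.
  have A1 : (L * W) ^+ 2 <= L ^+ 2 * ((l - (l - K))%:R * \sum_(l - K <= j < l) dd j).
    by rewrite exprMn; apply: ler_wpM2l => //; exact: sqr_ge0.
  have A2 : L ^+ 2 * ((l - (l - K))%:R * \sum_(l - K <= j < l) dd j) <=
            L ^+ 2 * (K%:R * \sum_(l - K <= j < l) dd j).
    by apply: ler_wpM2l; [exact: sqr_ge0 | exact: ler_wpM2r].
  by apply: (le_trans sq); apply: (le_trans A1); rewrite -mulrA.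
have ka : (0 < k - a * K)%N by rewrite subn_gt0; move: hk; rewrite addn1.
have k1 : (0 < k)%N by apply: leq_trans ka (leq_subr _ _).
have eL1 : eta * L <= 1.
  have : 0 <= eta * L * K%:R by apply: mulr_ge0 => //; apply: mulr_ge0; apply: ltW.
  move: hcond; lra.
case: k hk ka k1 => [//|k'] hk ka _.
have [b1 b2] := basic k'.
have Y1 := young2 (u k'.+1) (D k'.+1) (eta * mu / 2) 1.
have Y2 := young2 (u k'.+1) (e k'.+1) (mu / 2) 1.
have Y3 := young2 (e k'.+1) (D k'.+1) (- (2 * eta)) (3 - 2 * (eta * L)).
rewrite expr1n !mulr1 !mul1r (dotvC (u k'.+1)) in Y1.
rewrite expr1n !mulr1 !mul1r (dotvC (u k'.+1)) in Y2.
rewrite sqrrN in Y3.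
have H := @real_step R eta mu L (Fk k'.+2) (Fk k'.+1) (dd k'.+1)
  (dotv (u k'.+1) (u k'.+1)) (ee k'.+1) (dotv (e k'.+1) (D k'.+1))
  (dotv (e k'.+1) (u k'.+1)) (dotv (D k'.+1) (u k'.+1))
  heta hmu muL eL1 (Fk0 k') (dotv_ge0 _) (dotv_ge0 _) (dotv_ge0 _).
have H1 : eta * (Fk k'.+2 - Fk k'.+1) <= eta * (L / 2 * dd k'.+1) - dd k'.+1
   - eta * dotv (e k'.+1) (D k'.+1).
  by rewrite !FkE; move: b1; rewrite /dd; lra.
have H2 : eta * Fk k'.+2 <= eta * - (mu / 2 * dotv (u k'.+1) (u k'.+1)) +
    eta * (L / 2 * dd k'.+1) + (dotv (D k'.+1) (u k'.+1) - dd k'.+1) +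
    eta * (dotv (e k'.+1) (u k'.+1) - dotv (e k'.+1) (D k'.+1)).
  by rewrite FkE; move: b2; rewrite /dd.
have H3 : eta * mu * dotv (D k'.+1) (u k'.+1) <=
    (eta * mu / 2) ^+ 2 * dotv (u k'.+1) (u k'.+1) + dd k'.+1.
  by move: Y1; rewrite /dd; lra.
have H4 : mu * dotv (e k'.+1) (u k'.+1) <= (mu / 2) ^+ 2 * dotv (u k'.+1) (u k'.+1) + ee k'.+1.
  by move: Y2; rewrite /ee; lra.
have H5 : - (4 * eta * (3 - 2 * (eta * L))) * dotv (e k'.+1) (D k'.+1) <=
    4 * eta ^+ 2 * ee k'.+1 + (3 - 2 * (eta * L)) ^+ 2 * dd k'.+1.
  by move: Y3; rewrite /ee /dd exprMn; lra.
have {H H1 H2 H3 H4 H5} H := H H1 H2 H3 H4 H5.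
have [K0|Kpos] := eqVneq K 0%N.
  have tk : forall i, tau k'.+1 i = k'.+1.
    move=> i; have := htau k'.+1 i; rewrite K0 subn0 => hh.
    by apply/eqP; rewrite eqn_leq andbC.
  have e0 : e k'.+1 = 0.
    rewrite /e /g /G (eq_bigr (fun i => gfi i (x k'.+1))) ?subrr //.
    by move=> i _; rewrite tk.
  have ee0 : ee k'.+1 = 0 by rewrite /ee e0 dotv0l.
  rewrite ee0 in H.
  have P1 := P1_from0 heta hmu muL eL1 (Fk0 k') H.
  have S : \sum_(1 <= i < a) eps i * Fk (k'.+1 - i * K)%N = (\sum_(1 <= i < a) eps i) * Fk k'.+1.
    by rewrite mulr_suml; apply: eq_bigr => i _; rewrite K0 muln0 subn0.
  have Z : 4 * K%:R * Q * eps (a - 1)%N * \sum_(k'.+1 - a * K <= j < k'.+2) Fk j = 0.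
    by rewrite K0 !mulr0 !mul0r.
  rewrite S Z addr0.
  have -> : (1 - \sum_(1 <= i < a) eps i) * Fk k'.+1 + (\sum_(1 <= i < a) eps i) * Fk k'.+1
     = Fk k'.+1 by ring.
  exact: P1.
have hK : (0 < K)%N by rewrite lt0n.
have eL2 : eta * L * 2 <= 1.
  have K1 : 1 <= K%:R :> R by rewrite ler1n.
  have : eta * L * 1 <= eta * L * K%:R.
    by apply: ler_wpM2l => //; apply: mulr_ge0; apply: ltW.
  move: hcond; lra.
have P1 := P1_from heta hmu muL eL2 (Fk0 k') (dotv_ge0 _) H.
have hF : forall j, (k'.+1 - a * K <= j)%N -> 0 <= Fk j.
  by case=> [|j] hj; [move: (leq_trans ka hj) | exact: Fk0].
have hP2 : forall j, (k'.+1 - a * K <= j)%N ->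
    (1 - eta * L) * dd j <= 2 * eta * (Fk j - Fk j.+1) + eta ^+ 2 * ee j.
  by move=> j hj; apply: P2; exact: leq_trans ka hj.
have hP4 : forall j, (k'.+1 - a * K <= j)%N -> mu * dd j <= 4 * (Fk j + Fk j.+1).
  by move=> j hj; apply: P4; exact: leq_trans ka hj.
have C := @comb_final R Fk dd ee eta L mu K a k'.+1 heta Lpos hmu hK ha hk hcond hF
  (fun j => dotv_ge0 _) P1 hP2 P3 hP4.
have E : \sum_(1 <= l < a) 2 * eta * L * (eta * K%:R * L) ^+ (l - 1) * (Fk (k'.+1 - l * K)%N - Fk k'.+1)
  = \sum_(1 <= i < a) eps i * Fk (k'.+1 - i * K)%N - (\sum_(1 <= i < a) eps i) * Fk k'.+1.
  by rewrite mulr_suml -sumrB; apply: eq_bigr => l _; rewrite mulrBr.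
rewrite E in C.
apply: le_trans C _.
rewrite /Q /eps.
set S1 := \sum_(1 <= i < a) _.
set S2 := \sum_(1 <= i < a) _ * _.
set T := 4 * K%:R * _ * _ * _.
have -> : (1 - S2) * Fk k'.+1 + S1 = Fk k'.+1 + (S1 - S2 * Fk k'.+1) by ring.
by [].
Qed.
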